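(* Let $A$ be a finite subset of an abelian group $\mathbf G$, and let $n,m\ge1$ be integers. Then $$D_n(A)|A|^m\le D_{n+m}(A)\le D_n(A)D_m(A),$$ $$S_n(A)|A|^m\le S_{n+m}(A)\le S_n(A)\cdot\min\{S_m(A),D_m(A)\}.$$ Moreover, if $m\ge2$ then $D_n(A)|A|^m\le S_{n+m}(A)$, and if $m=1$ and $n\ge2$ then $D_{n-1}(A)|A|^2\le S_{n+1}(A)$.
   Context: For an integer $k\ge1$, $D_k(A)=|A^k-\Delta(A)|$ and $S_k(A)=|A^k+\Delta(A)|$, where $A^k\subseteq\mathbf G^k$ is the Cartesian power, $\Delta(A)=\{(a,\dots,a)\in\mathbf G^k:a\in A\}$, and sums/differences of subsets of $\mathbf G^k$ are taken coordinatewise, e.g. $A^k-\Delta(A)=\{(a_1-a,\dots,a_k-a):a,a_1,\dots,a_k\in A\}$. *)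

(* Defs.v *)
From HB Require Import structures.
From mathcomp Require Import all_boot all_order all_algebra finmap.
Set Implicit Arguments. Unset Strict Implicit. Unset Printing Implicit Defensive.
Import GRing.Theory.

Fixpoint cart_pow_seq (G : choiceType) (A : seq G) (k : nat) : seq (seq G) :=
  match k with
  | 0 => [:: [::]]
  | k'.+1 => [seq a :: t | a <- A, t <- cart_pow_seq A k']
  end.

(* A^k - Delta(A) = {(a_1 - a, ..., a_k - a) : a, a_i in A} *)
Local Open Scope fset_scope.
Definition diffset (G : zmodType) (A : {fset G}) (k : nat) : {fset seq G} :=
  [fset [seq (x - a)%R | x <- t] | t in cart_pow_seq (A : seq G) k, a in A].

(* A^k + Delta(A) = {(a_1 + a, ..., a_k + a) : a, a_i in A} *)
Definition sumset (G : zmodType) (A : {fset G}) (k : nat) : {fset seq G} :=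
  [fset [seq (x + a)%R | x <- t] | t in cart_pow_seq (A : seq G) k, a in A].

Definition D_ (G : zmodType) (k : nat) (A : {fset G}) : nat := #|` diffset A k|.
Definition S_ (G : zmodType) (k : nat) (A : {fset G}) : nat := #|` sumset A k|.

(* Main.v *)
Require Import Defs.
From HB Require Import structures.
From mathcomp Require Import all_boot all_order all_algebra finmap.
Set Implicit Arguments. Unset Strict Implicit. Unset Printing Implicit Defensive.
Import GRing.Theory.
Local Open Scope fset_scope.

Section Aux.
Variable G : zmodType.
Implicit Types (A : {fset G}) (t u : seq G) (a c : G).

Definition sh c t : seq G := [seq (x + c)%R | x <- t].

Lemma size_sh c t : size (sh c t) = size t.
Proof. by rewrite size_map. Qed.

Lemma sh_comp a c t : sh a (sh c t) = sh (c + a)%R t.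
Proof. by rewrite /sh -map_comp; apply: eq_map => x /=; rewrite addrA. Qed.

Lemma sh0 t : sh 0 t = t.
Proof. by rewrite /sh (eq_map (addr0 (V:=G))) map_id. Qed.

Lemma shNK a t : sh (- a) (sh a t) = t.
Proof. by rewrite sh_comp subrr sh0. Qed.

Lemma shKN a t : sh a (sh (- a) t) = t.
Proof. by rewrite sh_comp addNr sh0. Qed.

Lemma sh_inj a : injective (sh a).
Proof. exact: (can_inj (shNK a)). Qed.

Lemma sh_cat a t u : sh a (t ++ u) = sh a t ++ sh a u.
Proof. exact: map_cat. Qed.

Lemma mem_cp (A : seq G) k t :
  (t \in cart_pow_seq A k) = (size t == k) && all (mem A) t.
Proof.
elim: k t => [|k IH] t /=; first by case: t.
apply/(@allpairsPdep _ (fun _ => _))/idP.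
  move=> [a [u [aA uc ->]]] /=; move: uc; rewrite IH aA => /andP[/eqP-> ->] //.
  by rewrite eqxx.
case: t => [|b v] /=; first by [].
move=> /andP[Hs /andP[bA Hv]].
by exists b, v; rewrite IH -eqSS Hs Hv bA.
Qed.

Lemma size_cp (A : seq G) k : size (cart_pow_seq A k) = (size A ^ k)%N.
Proof. by elim: k => [|k IH] //=; rewrite size_allpairs IH expnS. Qed.

Lemma uniq_cp (A : seq G) k : uniq A -> uniq (cart_pow_seq A k).
Proof.
move=> uA; elim: k => [|k IH] //=.
by apply: allpairs_uniq => // -[a u] [b v] _ _ /= [-> ->].
Qed.

Lemma diffsetP A k y : reflect (exists2 t, t \in cart_pow_seq A k & exists2 a, a \in A & y = sh (- a) t)
  (y \in diffset A k).
Proof.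
apply: (iffP (imfset2P _ _ _ _ _)).
  by move=> [t Ht [a Ha ->]]; exists t => //; exists a.
by move=> [t Ht [a Ha ->]]; exists t => //; exists a.
Qed.

Lemma sumsetP A k y : reflect (exists2 t, t \in cart_pow_seq A k & exists2 a, a \in A & y = sh a t)
  (y \in sumset A k).
Proof.
apply: (iffP (imfset2P _ _ _ _ _)).
  by move=> [t Ht [a Ha ->]]; exists t => //; exists a.
by move=> [t Ht [a Ha ->]]; exists t => //; exists a.
Qed.

Lemma inj_le (T U : eqType) (s : seq T) (t : seq U) (f : T -> U) :
  uniq s -> {in s &, injective f} -> (forall x, x \in s -> f x \in t) ->
  (size s <= size t)%N.
Proof.
move=> us fi ft; rewrite -(size_map f); apply: uniq_leq_size.
  by rewrite map_inj_in_uniq.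
by move=> y /mapP[x xs ->]; apply: ft.
Qed.


Lemma cp_size (A : seq G) k t : t \in cart_pow_seq A k -> size t = k.
Proof. by rewrite mem_cp => /andP[/eqP]. Qed.

Lemma cp_cat (A : seq G) k l t u : t \in cart_pow_seq A k -> u \in cart_pow_seq A l ->
  t ++ u \in cart_pow_seq A (k + l).
Proof.
rewrite !mem_cp => /andP[/eqP st at_] /andP[/eqP su au].
by rewrite size_cat st su eqxx all_cat at_ au.
Qed.

Lemma cp_take (A : seq G) k l t : t \in cart_pow_seq A (k + l) -> take k t \in cart_pow_seq A k.
Proof.
rewrite !mem_cp => /andP[/eqP st at_]; rewrite size_take st.
rewrite (_ : (k < k + l)%N = (0 < l)%N); last by rewrite -{1}(addn0 k) ltn_add2l.
apply/andP; split; first by case: l {st} => [|l]; rewrite ?addn0 //=.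
by apply/allP => x /mem_take xt; move/allP: at_; apply.
Qed.

Lemma cp_drop (A : seq G) k l t : t \in cart_pow_seq A (k + l) -> drop k t \in cart_pow_seq A l.
Proof.
rewrite !mem_cp => /andP[/eqP st at_]; rewrite size_drop st addKn eqxx /=.
by apply/allP => x /mem_drop xt; move/allP: at_; apply.
Qed.

Lemma cp_sh_size (A : seq G) k c t : t \in cart_pow_seq A k -> size (sh c t) = k.
Proof. by rewrite size_sh; apply: cp_size. Qed.

Definition cd (A : {fset G}) n (x : seq G) : G :=
  nth 0%R A (find (fun c => sh c x \in cart_pow_seq A n) A).
Definition cs (A : {fset G}) n (x : seq G) : G :=
  nth 0%R A (find (fun c => sh (- c) x \in cart_pow_seq A n) A).

Lemma cdP A n x : x \in diffset A n -> cd A n x \in A /\ sh (cd A n x) x \in cart_pow_seq A n.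
Proof.
move=> /diffsetP[t Ht [a Ha ->]].
have hP : has (fun c => sh c (sh (- a) t) \in cart_pow_seq A n) A.
  by apply/hasP; exists a => //; rewrite shKN.
split; first by rewrite /cd mem_nth // -has_find.
exact: (nth_find 0%R hP).
Qed.

Lemma csP A n x : x \in sumset A n -> cs A n x \in A /\ sh (- cs A n x) x \in cart_pow_seq A n.
Proof.
move=> /sumsetP[t Ht [a Ha ->]].
have hP : has (fun c => sh (- c) (sh a t) \in cart_pow_seq A n) A.
  by apply/hasP; exists a => //; rewrite shNK.
split; first by rewrite /cs mem_nth // -has_find.
exact: (nth_find 0%R hP).
Qed.

Lemma diff_size A n x : x \in diffset A n -> size x = n.
Proof. by move=> /diffsetP[t Ht [a _ ->]]; apply: cp_sh_size Ht. Qed.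
Lemma sum_size A n x : x \in sumset A n -> size x = n.
Proof. by move=> /sumsetP[t Ht [a _ ->]]; apply: cp_sh_size Ht. Qed.

Lemma cardA_pow A m : (#|` A| ^ m)%N = size (cart_pow_seq (A : seq G) m).
Proof. by rewrite size_cp. Qed.

Lemma L_D A n m : (D_ n A * #|` A| ^ m <= D_ (n + m) A)%N.
Proof.
rewrite /D_ cardA_pow -(size_allpairs pair).
apply: (inj_le (f := fun p => p.1 ++ sh (- cd A n p.1) p.2)).
- apply: allpairs_uniq; [exact: fset_uniq | exact: uniq_cp (fset_uniq _) |].
  by move=> [x b] [y c] _ _ /= [-> ->].
- move=> [x b] [y c] /allpairsP[[x0 b0] [/= xX bY [-> ->]]]
                 /allpairsP[[y0 c0] [/= yX cY [-> ->]]] /= E.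
  have Ex : x0 = y0.
    have := congr1 (take n) E.
    by rewrite !take_size_cat ?(diff_size xX) ?(diff_size yX).
  subst y0; congr pair; apply: (sh_inj (a := - cd A n x0)).
  by have := congr1 (drop n) E; rewrite !drop_size_cat ?(diff_size xX).
- move=> [x b] /allpairsP[[x0 b0] [/= xX bY [-> ->]]] /=.
  have [cA cx] := cdP xX.
  apply/diffsetP; exists (sh (cd A n x0) x0 ++ b0); first exact: cp_cat.
  by exists (cd A n x0) => //; rewrite sh_cat shNK.
Qed.

Lemma take_sh k c t : take k (sh c t) = sh c (take k t).
Proof. by rewrite /sh map_take. Qed.
Lemma drop_sh k c t : drop k (sh c t) = sh c (drop k t).
Proof. by rewrite /sh map_drop. Qed.

Lemma L_S A n m : (S_ n A * #|` A| ^ m <= S_ (n + m) A)%N.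
Proof.
rewrite /S_ cardA_pow -(size_allpairs pair).
apply: (inj_le (f := fun p => p.1 ++ sh (cs A n p.1) p.2)).
- apply: allpairs_uniq; [exact: fset_uniq | exact: uniq_cp (fset_uniq _) |].
  by move=> [x b] [y c] _ _ /= [-> ->].
- move=> [x b] [y c] /allpairsP[[x0 b0] [/= xX bY [-> ->]]]
                 /allpairsP[[y0 c0] [/= yX cY [-> ->]]] /= E.
  have Ex : x0 = y0.
    have := congr1 (take n) E.
    by rewrite !take_size_cat ?(sum_size xX) ?(sum_size yX).
  subst y0; congr pair; apply: (sh_inj (a := cs A n x0)).
  by have := congr1 (drop n) E; rewrite !drop_size_cat ?(sum_size xX).
- move=> [x b] /allpairsP[[x0 b0] [/= xX bY [-> ->]]] /=.
  have [cA cx] := csP xX.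
  apply/sumsetP; exists (sh (- cs A n x0) x0 ++ b0); first exact: cp_cat.
  by exists (cs A n x0) => //; rewrite sh_cat shKN.
Qed.

Lemma seq_nth0 (b : seq G) : (0 < size b)%N -> b = nth 0%R b 0 :: behead b.
Proof. by case: b. Qed.

Lemma L_DS A n m : (0 < m)%N -> (D_ n A * #|` A| ^ m <= S_ (n + m) A)%N.
Proof.
move=> m0.
rewrite /D_ /S_ cardA_pow -(size_allpairs pair).
pose f := fun p : seq G * seq G =>
  sh (cd A n p.1 + nth 0%R p.2 0) p.1 ++ (cd A n p.1 + nth 0%R p.2 0)%R :: sh (nth 0%R p.2 0) (behead p.2).
apply: (inj_le (f := f)).
- apply: allpairs_uniq; [exact: fset_uniq | exact: uniq_cp (fset_uniq _) |].
  by move=> [x b] [y c] _ _ /= [-> ->].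
- move=> [x b] [y c] /allpairsP[[x0 b0] [/= xX bY [-> ->]]]
                 /allpairsP[[y0 c0] [/= yX cY [-> ->]]] E.
  have E1 := congr1 (take n) E; have E2 := congr1 (drop n) E.
  rewrite /f /= !take_size_cat ?size_sh ?(diff_size xX) ?(diff_size yX) // in E1.
  rewrite /f /= !drop_size_cat ?size_sh ?(diff_size xX) ?(diff_size yX) // in E2.
  case: E2 => Ec Eb.
  rewrite Ec in E1; have Ex := sh_inj E1; subst y0.
  have Ea := addrI _ Ec.
  rewrite Ea in Eb; have Eb' := sh_inj Eb.
  congr pair.
  by rewrite (seq_nth0 (b := b0)) ?(cp_size bY) // (seq_nth0 (b := c0)) ?(cp_size cY) // Ea Eb'.
- move=> [x b] /allpairsP[[x0 b0] [/= xX bY [-> ->]]] /=.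
  have [cA cx] := cdP xX.
  have sb := cp_size bY.
  move: bY; rewrite /f /= (seq_nth0 (b := b0)) ?sb // => bY.
  set h := nth 0%R b0 0; set r := behead b0.
  move: bY; rewrite mem_cp /= => /andP[Hs /andP[hA rA]].
  apply/sumsetP; exists (sh (cd A n x0) x0 ++ cd A n x0 :: r).
    apply: cp_cat => //; rewrite mem_cp /= Hs cA rA.
    done.
  by exists h => //; rewrite sh_cat sh_comp.
Qed.

Lemma U_D A n m : (D_ (n + m) A <= D_ n A * D_ m A)%N.
Proof.
rewrite /D_ -(size_allpairs pair).
apply: (inj_le (f := fun y => (take n y, drop n y))); first exact: fset_uniq.
- by move=> y z _ _ [E1 E2]; rewrite -(cat_take_drop n y) E1 E2 cat_take_drop.
- move=> y /diffsetP[t Ht [a Ha ->]].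
  apply/allpairsP; exists (take n (sh (-a) t), drop n (sh (-a) t)); split=> //=.
    by apply/diffsetP; exists (take n t); [exact: cp_take Ht| exists a => //; rewrite take_sh].
  by apply/diffsetP; exists (drop n t); [exact: cp_drop Ht| exists a => //; rewrite drop_sh].
Qed.

Lemma U_S A n m : (S_ (n + m) A <= S_ n A * S_ m A)%N.
Proof.
rewrite /S_ -(size_allpairs pair).
apply: (inj_le (f := fun y => (take n y, drop n y))); first exact: fset_uniq.
- by move=> y z _ _ [E1 E2]; rewrite -(cat_take_drop n y) E1 E2 cat_take_drop.
- move=> y /sumsetP[t Ht [a Ha ->]].
  apply/allpairsP; exists (take n (sh a t), drop n (sh a t)); split=> //=.
    by apply/sumsetP; exists (take n t); [exact: cp_take Ht| exists a => //; rewrite take_sh].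
  by apply/sumsetP; exists (drop n t); [exact: cp_drop Ht| exists a => //; rewrite drop_sh].
Qed.

Lemma U_SD A n m : (0 < n)%N -> (S_ (n + m) A <= S_ n A * D_ m A)%N.
Proof.
move=> n0; rewrite /S_ /D_ -(size_allpairs pair).
apply: (inj_le (f := fun y => (take n y, sh (- nth 0%R y 0) (drop n y)))); first exact: fset_uniq.
- move=> y z _ _ [E1 E2].
  have Eh : nth 0%R y 0 = nth 0%R z 0.
    by rewrite -(nth_take 0%R n0 y) E1 nth_take.
  rewrite Eh in E2; have E2' := sh_inj E2.
  by rewrite -(cat_take_drop n y) E1 E2' cat_take_drop.
- move=> y /sumsetP[t Ht [a Ha ->]].
  have st := cp_size Ht.
  have t0 : (0 < size t)%N by rewrite st (leq_trans n0) ?leq_addr.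
  apply/allpairsP; exists (take n (sh a t), sh (- nth 0%R (sh a t) 0) (drop n (sh a t))); split=> //=.
    by apply/sumsetP; exists (take n t); [exact: cp_take Ht| exists a => //; rewrite take_sh].
  apply/diffsetP; exists (drop n t); first exact: cp_drop Ht.
  exists (nth 0%R t 0).
    by move: Ht; rewrite mem_cp => /andP[_ /allP]; apply; rewrite mem_nth.
  rewrite drop_sh sh_comp (nth_map 0%R) //; congr sh.
  by rewrite opprD addrCA subrr addr0.
Qed.
End Aux.

Theorem proposition11 (G : zmodType) (A : {fset G}) (n m : nat) :
  (1 <= n)%N -> (1 <= m)%N ->
  [/\ (D_ n A * #|` A| ^ m <= D_ (n + m) A <= D_ n A * D_ m A)%N,
      (S_ n A * #|` A| ^ m <= S_ (n + m) A
         <= S_ n A * minn (S_ m A) (D_ m A))%N,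
      ((2 <= m)%N -> (D_ n A * #|` A| ^ m <= S_ (n + m) A)%N)
    & (m = 1%N -> (2 <= n)%N -> (D_ n.-1 A * #|` A| ^ 2 <= S_ (n + 1) A)%N)].
Proof.
move=> n1 m1; split.
- by rewrite L_D U_D.
- rewrite L_S /= /minn; case: ifP => _; [exact: U_S | exact: U_SD].
- by move=> _; apply: L_DS.
- move=> _ n2; have := L_DS A n.-1 (m := 2) isT.
  by case: n n1 n2 => [|k] //= _ _; rewrite addn2 addn1.
Qed.
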